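(* Let $Q=ABCD$ be a non-degenerate convex quadrangle of perimeter $2$ with $s_1=|AB|$, $s_2=|BC|$, $s_3=|CD|$, $s_4=|DA|$. Let $B_1$ be the point lying in the same open half-plane with respect to the line $AC$ as $B$ with $|B_1A|=(s_2+s_3+s_4-s_1)/2$ and $|B_1C|=(s_1+s_3+s_4-s_2)/2$, and let $D_1$ be the point lying in the same open half-plane with respect to $AC$ as $D$ with $|D_1A|=(s_1+s_2+s_3-s_4)/2$ and $|D_1C|=(s_1+s_2+s_4-s_3)/2$. Then these points exist and the quadrangle $AB_1CD_1$ is congruent to the dual quadrangle $Q^\circ=KLMN$, via an isometry sending $K,L,M,N$ to $A,B_1,C,D_1$ respectively.
   Context: Identify $\mathbb{R}^2$ with $\mathbb{C}$. A quadrangle $Q=ABCD$ is an ordered 4-tuple of points $A,B,C,D\in\mathbb{C}$: $A$ is the first vertex and the order $A\to B\to C\to D\to A$ is the direction of traversal. Its edge vectors are $z_1=B-A$, $z_2=C-B$, $z_3=D-C$, $z_4=A-D$, so $z_1+z_2+z_3+z_4=0$; its perimeter is $|z_1|+|z_2|+|z_3|+|z_4|$. $Q$ is non-degenerate if each pair of consecutive edge vectors $(z_1,z_2),(z_2,z_3),(z_3,z_4),(z_4,z_1)$ consists of nonzero, non-collinear vectors. A non-degenerate quadrangle is convex if no two opposite edges intersect and all its interior angles are less than $\pi$. Associated plane: for a non-degenerate $Q$ of perimeter $2$, choose $u_1,\dots,u_4\in\mathbb{C}$ with $u_k^2=z_k$, where $u_1$ is an arbitrary square root of $z_1$ and for $k=1,2,3$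 the sign of $u_{k+1}$ is chosen so that $\operatorname{Im}(\overline{u_k}u_{k+1})$ has the same sign as $\operatorname{Im}(\overline{z_k}z_{k+1})$. Write $u_k=a_k+i b_k$ and $\bar a=(a_1,a_2,a_3,a_4)$, $\bar b=(b_1,b_2,b_3,b_4)$; these are orthonormal in $\mathbb{R}^4$. Let $\Pi=\operatorname{span}(\bar a,\bar b)$ and $\Pi^\perp$ its orthogonal complement. Dual quadrangle: choose an orthonormal basis $(\bar c,\bar d)$ of $\Pi^\perp$, put $w_k=(c_k+i d_k)^2$; then $\sum_k w_k=0$ and $\sum_k|w_k|=2$. The dual quadrangle $Q^\circ=KLMN$ is the quadrangle with $L-K=w_1$, $M-L=w_2$, $N-M=w_3$, $K-N=w_4$. It is determined up to rotation, reflection and translation. *)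

(* Defs.v *)
(* Stdlib reals. The plane C = R^2 is modelled as pairs (x, y) : R * R,
   with x + i y identified with (x, y). *)
From Stdlib Require Import Reals.
Open Scope R_scope.

Definition pt : Type := (R * R)%type.
Definition px (p : pt) : R := fst p.
Definition py (p : pt) : R := snd p.
Definition padd (p q : pt) : pt := (px p + px q, py p + py q).
Definition psub (p q : pt) : pt := (px p - px q, py p - py q).
(* Im (conj p * q) *)
Definition cross (p q : pt) : R := px p * py q - py p * px q.
Definition csq (p : pt) : pt := (px p * px p - py p * py p, 2 * px p * py p).
Definition pnorm (p : pt) : R := sqrt (px p ^ 2 + py p ^ 2).
Definition dist (p q : pt) : R := pnorm (psub p q).
Definition origin : pt := (0, 0).

Definition z1 (A B C D : pt) : pt := psub B A.
Definition z2 (A B C D : pt) : pt := psub C B.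
Definition z3 (A B C D : pt) : pt := psub D C.
Definition z4 (A B C D : pt) : pt := psub A D.

Definition perimeter (A B C D : pt) : R :=
  pnorm (z1 A B C D) + pnorm (z2 A B C D) + pnorm (z3 A B C D) + pnorm (z4 A B C D).

Definition nondegenerate (A B C D : pt) : Prop :=
  let w1 := z1 A B C D in let w2 := z2 A B C D in
  let w3 := z3 A B C D in let w4 := z4 A B C D in
  w1 <> origin /\ w2 <> origin /\ w3 <> origin /\ w4 <> origin /\
  cross w1 w2 <> 0 /\ cross w2 w3 <> 0 /\ cross w3 w4 <> 0 /\ cross w4 w1 <> 0.

Definition on_segment (P X Y : pt) : Prop :=
  exists t : R, 0 <= t <= 1 /\
    P = (px X + t * (px Y - px X), py X + t * (py Y - py X)).

Definition segments_meet (X Y Z W : pt) : Prop :=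
  exists P : pt, on_segment P X Y /\ on_segment P Z W.

Definition convex_quad (A B C D : pt) : Prop :=
  let w1 := z1 A B C D in let w2 := z2 A B C D in
  let w3 := z3 A B C D in let w4 := z4 A B C D in
  nondegenerate A B C D /\
  ~ segments_meet A B C D /\ ~ segments_meet B C D A /\
  ((0 < cross w1 w2 /\ 0 < cross w2 w3 /\ 0 < cross w3 w4 /\ 0 < cross w4 w1) \/
   (cross w1 w2 < 0 /\ cross w2 w3 < 0 /\ cross w3 w4 < 0 /\ cross w4 w1 < 0)).

(* KLMN is a dual quadrangle of ABCD (for some admissible choice of the square
   roots u_k and of the orthonormal basis (c, d) of Pi^perp). *)
Definition is_dual (A B C D K L M N : pt) : Prop :=
  let w1 := z1 A B C D in let w2 := z2 A B C D in
  let w3 := z3 A B C D in let w4 := z4 A B C D in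
  exists u1 u2 u3 u4 : pt,
    csq u1 = w1 /\ csq u2 = w2 /\ csq u3 = w3 /\ csq u4 = w4 /\
    (* sign(Im(conj u_k u_{k+1})) = sign(Im(conj z_k z_{k+1})), k = 1,2,3 *)
    0 < cross u1 u2 * cross w1 w2 /\
    0 < cross u2 u3 * cross w2 w3 /\
    0 < cross u3 u4 * cross w3 w4 /\
    let a1 := px u1 in let a2 := px u2 in let a3 := px u3 in let a4 := px u4 in
    let b1 := py u1 in let b2 := py u2 in let b3 := py u3 in let b4 := py u4 in
    exists c1 c2 c3 c4 d1 d2 d3 d4 : R,
      c1*c1 + c2*c2 + c3*c3 + c4*c4 = 1 /\
      d1*d1 + d2*d2 + d3*d3 + d4*d4 = 1 /\
      c1*d1 + c2*d2 + c3*d3 + c4*d4 = 0 /\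
      (* (c, d) in Pi^perp, Pi = span(a, b) *)
      c1*a1 + c2*a2 + c3*a3 + c4*a4 = 0 /\
      c1*b1 + c2*b2 + c3*b3 + c4*b4 = 0 /\
      d1*a1 + d2*a2 + d3*a3 + d4*a4 = 0 /\
      d1*b1 + d2*b2 + d3*b3 + d4*b4 = 0 /\
      psub L K = csq (c1, d1) /\ psub M L = csq (c2, d2) /\
      psub N M = csq (c3, d3) /\ psub K N = csq (c4, d4).

Definition same_open_side (X Y P Q : pt) : Prop :=
  0 < cross (psub Y X) (psub P X) * cross (psub Y X) (psub Q X).

Definition B1_spec (A B C D B1 : pt) : Prop :=
  let s1 := dist A B in let s2 := dist B C in
  let s3 := dist C D in let s4 := dist D A in
  same_open_side A C B1 B /\
  dist B1 A = (s2 + s3 + s4 - s1) / 2 /\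
  dist B1 C = (s1 + s3 + s4 - s2) / 2.

Definition D1_spec (A B C D D1 : pt) : Prop :=
  let s1 := dist A B in let s2 := dist B C in
  let s3 := dist C D in let s4 := dist D A in
  same_open_side A C D1 D /\
  dist D1 A = (s1 + s2 + s3 - s4) / 2 /\
  dist D1 C = (s1 + s2 + s4 - s3) / 2.

Definition isometry (f : pt -> pt) : Prop :=
  forall p q : pt, dist (f p) (f q) = dist p q.

(* Main.v *)
Require Import Defs.
From Stdlib Require Import Reals Lra Psatz.
Open Scope R_scope.

Lemma pnorm_nonneg p : 0 <= pnorm p.
Proof. unfold pnorm. apply sqrt_pos. Qed.

Lemma pnorm_sq p : pnorm p * pnorm p = px p ^ 2 + py p ^ 2.
Proof. unfold pnorm. apply sqrt_sqrt. nra. Qed.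

Lemma pnorm_congr p q : px p ^ 2 + py p ^ 2 = px q ^ 2 + py q ^ 2 -> pnorm p = pnorm q.
Proof. intro H. unfold pnorm. rewrite H. reflexivity. Qed.

Lemma pnorm_of_sq p r : 0 <= r -> px p ^ 2 + py p ^ 2 = r ^ 2 -> pnorm p = r.
Proof. intros Hr H. unfold pnorm. rewrite H. apply sqrt_pow2. exact Hr. Qed.

Lemma pnorm_csq u : pnorm (csq u) = px u ^ 2 + py u ^ 2.
Proof. apply pnorm_of_sq. apply Rplus_le_le_0_compat; apply pow2_ge_0. destruct u as [x y]. unfold csq, px, py. simpl. ring. Qed.

Lemma pnorm_sym X Y : pnorm (psub X Y) = pnorm (psub Y X).
Proof. apply pnorm_congr. destruct X, Y. unfold psub, px, py; simpl. ring. Qed.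

Lemma sq_lt_lt x y : 0 <= x -> 0 <= y -> x * x < y * y -> x < y.
Proof. intros. nra. Qed.

Lemma tri_core (x1 y1 x2 y2 : R) : x1*y2 - y1*x2 <> 0 ->
  sqrt ((x1+x2)^2+(y1+y2)^2) < sqrt (x1^2+y1^2) + sqrt (x2^2+y2^2).
Proof.
  intro Hc.
  assert (H1 := sqrt_sqrt ((x1+x2)^2+(y1+y2)^2)).
  assert (H2 := sqrt_sqrt (x1^2+y1^2)).
  assert (H3 := sqrt_sqrt (x2^2+y2^2)).
  assert (P1 := sqrt_pos ((x1+x2)^2+(y1+y2)^2)).
  assert (P2 := sqrt_pos (x1^2+y1^2)).
  assert (P3 := sqrt_pos (x2^2+y2^2)).
  set (n := sqrt ((x1+x2)^2+(y1+y2)^2)) in *.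
  set (n1 := sqrt (x1^2+y1^2)) in *.
  set (n2 := sqrt (x2^2+y2^2)) in *.
  assert (E1 : n*n = (x1+x2)^2+(y1+y2)^2) by (apply H1; apply Rplus_le_le_0_compat; apply pow2_ge_0).
  assert (E2 : n1*n1 = x1^2+y1^2) by (apply H2; apply Rplus_le_le_0_compat; apply pow2_ge_0).
  assert (E3 : n2*n2 = x2^2+y2^2) by (apply H3; apply Rplus_le_le_0_compat; apply pow2_ge_0).
  assert (Hcr : 0 < (x1*y2 - y1*x2)^2).
  { assert (x1*y2 - y1*x2 < 0 \/ 0 < x1*y2 - y1*x2) by lra. destruct H; nra. }
  assert (Hp : (n1*n2)*(n1*n2) = (x1*x2+y1*y2)^2 + (x1*y2-y1*x2)^2).
  { replace ((n1*n2)*(n1*n2)) with ((n1*n1)*(n2*n2)) by ring. rewrite E2, E3. ring. }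
  assert (Hd : x1*x2+y1*y2 < n1*n2).
  { apply Rnot_le_lt. intro Hle.
    assert (0 <= n1*n2) by nra. nra. }
  apply sq_lt_lt; try lra; nra.
Qed.

Lemma tri3 (x y : pt) : cross x y <> 0 ->
  pnorm (padd x y) < pnorm x + pnorm y /\
  pnorm x < pnorm (padd x y) + pnorm y /\
  pnorm y < pnorm (padd x y) + pnorm x.
Proof.
  destruct x as [x1 y1], y as [x2 y2]. unfold cross, pnorm, padd, px, py; simpl. intro Hc.
  split; [|split].
  - apply tri_core; auto.
  - pose proof (tri_core (x1+x2) (y1+y2) (-x2) (-y2)) as T.
    replace ((x1 + x2 + - x2) ^ 2 + (y1 + y2 + - y2) ^ 2) with (x1^2+y1^2) in T by ring.
    replace ((- x2) ^ 2 + (- y2) ^ 2) with (x2^2+y2^2) in T by ring.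
    apply T. intro; apply Hc; lra.
  - pose proof (tri_core (x1+x2) (y1+y2) (-x1) (-y1)) as T.
    replace ((x1 + x2 + - x1) ^ 2 + (y1 + y2 + - y1) ^ 2) with (x2^2+y2^2) in T by ring.
    replace ((- x1) ^ 2 + (- y1) ^ 2) with (x1^2+y1^2) in T by ring.
    apply T. intro; apply Hc; lra.
Qed.

Lemma circle (A C : pt) (r1 r2 sg : R) :
  r1 - r2 < pnorm (psub C A) -> r2 - r1 < pnorm (psub C A) ->
  pnorm (psub C A) < r1 + r2 -> sg <> 0 ->
  exists P, pnorm (psub P A) = r1 /\ pnorm (psub P C) = r2 /\
            0 < cross (psub C A) (psub P A) * sg.
Proof.
  intros H1 H2 H3 Hsg.
  pose proof (pnorm_sq (psub C A)) as Hsq.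
  pose proof (pnorm_nonneg (psub C A)) as Hnn.
  set (dv := pnorm (psub C A)) in *.
  destruct A as [xa ya], C as [xc yc]. unfold psub, px, py in Hsq; cbn [fst snd] in Hsq.
  set (vx := xc - xa) in *. set (vy := yc - ya) in *.
  set (dd := vx^2 + vy^2) in *.
  assert (Hdv : 0 < dv) by lra.
  assert (Hdd : 0 < dd) by (rewrite <- Hsq; apply Rmult_lt_0_compat; lra).
  assert (Hr1 : 0 < r1) by lra. assert (Hr2 : 0 < r2) by lra.
  set (t := (dd + r1^2 - r2^2) / (2*dd)).
  set (h2 := r1^2/dd - t^2).
  assert (Hh2 : 0 < h2).
  { assert (Hk : 4*dd*dd*h2 = (r2 - r1 + dv)*(r2 + r1 - dv)*(r1+dv-r2)*(r1+dv+r2)).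
    { unfold h2, t. rewrite <- Hsq. field. lra. }
    assert (0 < (r2 - r1 + dv)*(r2 + r1 - dv)) by (apply Rmult_lt_0_compat; lra).
    assert (0 < (r1+dv-r2)*(r1+dv+r2)) by (apply Rmult_lt_0_compat; lra).
    assert (0 < 4*dd*dd*h2) by (rewrite Hk; nra).
    nra. }
  set (s := if Rlt_dec 0 sg then sqrt h2 else - sqrt h2).
  assert (Hs2 : s * s = h2).
  { unfold s. destruct (Rlt_dec 0 sg); [|replace (- sqrt h2 * - sqrt h2) with (sqrt h2 * sqrt h2) by ring];
    apply sqrt_sqrt; lra. }
  assert (Hss : 0 < s * sg).
  { assert (0 < sqrt h2) by (apply sqrt_lt_R0; lra).
    unfold s. destruct (Rlt_dec 0 sg); nra. }
  exists (xa + t*vx - s*vy, ya + t*vy + s*vx).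
  unfold cross, psub, px, py; cbn [fst snd]. split; [|split].
  - apply (pnorm_of_sq (_, _)); [lra|]. unfold px, py; cbn [fst snd].
    replace ((xa + t * vx - s * vy - xa) ^ 2 + (ya + t * vy + s * vx - ya) ^ 2)
      with ((t*t + s*s) * dd) by (unfold dd; ring).
    rewrite Hs2. unfold h2. field. lra.
  - apply (pnorm_of_sq (_, _)); [lra|]. unfold px, py; cbn [fst snd].
    replace ((xa + t * vx - s * vy - xc) ^ 2 + (ya + t * vy + s * vx - yc) ^ 2)
      with ((t*t + s*s) * dd - 2*t*dd + dd) by (unfold dd, vx, vy; ring).
    rewrite Hs2. unfold h2, t. field. lra.
  - match goal with |- 0 < ?e * sg => replace e with (s*dd) by (unfold dd, vx, vy; ring) end.
    replace (s*dd*sg) with ((s*sg)*dd) by ring. apply Rmult_lt_0_compat; lra.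
Qed.

Lemma circle_uniq (A C P P' : pt) :
  0 < pnorm (psub C A) ->
  pnorm (psub P A) = pnorm (psub P' A) -> pnorm (psub P C) = pnorm (psub P' C) ->
  0 < cross (psub C A) (psub P A) * cross (psub C A) (psub P' A) -> P = P'.
Proof.
  intros H0 H1 H2 H3.
  assert (E1 := pnorm_sq (psub P A)). assert (E1' := pnorm_sq (psub P' A)).
  assert (E2 := pnorm_sq (psub P C)). assert (E2' := pnorm_sq (psub P' C)).
  assert (E0 := pnorm_sq (psub C A)).
  rewrite H1 in E1. rewrite H2 in E2. rewrite E1 in E1'. rewrite E2 in E2'.
  clear H1 H2 E1 E2.
  destruct A as [xa ya], C as [xc yc], P as [x y], P' as [x' y'].
  unfold cross, psub, px, py in *; cbn [fst snd] in *.
  set (vx := xc - xa) in *. set (vy := yc - ya) in *.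
  assert (Hdd : 0 < vx^2 + vy^2) by (rewrite <- E0; apply Rmult_lt_0_compat; lra).
  assert (Hdot : vx*(x-xa) + vy*(y-ya) = vx*(x'-xa) + vy*(y'-ya)).
  { unfold vx, vy in *. nra. }
  set (c1 := vx * (y - ya) - vy * (x - xa)) in *.
  set (c2 := vx * (y' - ya) - vy * (x' - xa)) in *.
  assert (Hc : c1*c1 = c2*c2).
  { assert (c1*c1 = (vx^2+vy^2)*((x-xa)^2+(y-ya)^2) - (vx*(x-xa) + vy*(y-ya))^2) by (unfold c1; ring).
    assert (c2*c2 = (vx^2+vy^2)*((x'-xa)^2+(y'-ya)^2) - (vx*(x'-xa) + vy*(y'-ya))^2) by (unfold c2; ring).
    rewrite H, H1, Hdot. rewrite E1'. reflexivity. }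
  assert (Hc12 : c1 = c2).
  { assert (Hf : (c1 - c2) * (c1 + c2) = 0) by (rewrite Rmult_comm; lra).
    apply Rmult_integral in Hf. destruct Hf as [Hf|Hf]; [lra|].
    assert (c2 = - c1) by lra. subst c2. exfalso. nra. }
  assert (Ex : (vx^2+vy^2) * (x - x') = 0).
  { replace ((vx^2+vy^2) * (x - x')) with (vx*((vx*(x-xa) + vy*(y-ya)) - (vx*(x'-xa) + vy*(y'-ya))) - vy*(c1 - c2)) by (unfold c1, c2; ring).
    rewrite Hdot, Hc12. ring. }
  assert (Ey : (vx^2+vy^2) * (y - y') = 0).
  { replace ((vx^2+vy^2) * (y - y')) with (vy*((vx*(x-xa) + vy*(y-ya)) - (vx*(x'-xa) + vy*(y'-ya))) + vx*(c1 - c2)) by (unfold c1, c2; ring).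
    rewrite Hdot, Hc12. ring. }
  apply Rmult_integral in Ex. apply Rmult_integral in Ey.
  destruct Ex as [Ex|Ex]; [lra|]. destruct Ey as [Ey|Ey]; [lra|].
  f_equal; lra.
Qed.

Definition rig (K M A C : pt) (sg : R) (p : pt) : pt :=
  let ex := px M - px K in let ey := py M - py K in
  let vx := px C - px A in let vy := py C - py A in
  let dd := vx^2 + vy^2 in
  let x1 := px p - px K in let x2 := py p - py K in
  let E := ex*x1 + ey*x2 in let Cr := ex*x2 - ey*x1 in
  (px A + (E*vx - sg*Cr*vy)/dd, py A + (E*vy + sg*Cr*vx)/dd).

Lemma rigid (K M A C : pt) (sg : R) : sg*sg = 1 ->
  pnorm (psub M K) = pnorm (psub C A) -> 0 < pnorm (psub C A) ->
  exists f, isometry f /\ f K = A /\ f M = C /\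
    forall p, cross (psub C A) (psub (f p) A) = sg * cross (psub M K) (psub p K).
Proof.
  intros Hsg Hn Hpos.
  assert (E0 := pnorm_sq (psub C A)). assert (E1 := pnorm_sq (psub M K)).
  rewrite Hn in E1. rewrite E1 in E0. clear E1.
  assert (Hdd : 0 < px (psub C A) ^ 2 + py (psub C A) ^ 2) by (rewrite <- (pnorm_sq (psub C A)); apply Rmult_lt_0_compat; lra).
  clear Hn Hpos.
  exists (rig K M A C sg).
  destruct K as [xk yk], M as [xm ym], A as [xa ya], C as [xc yc].
  unfold psub, px, py in E0, Hdd; cbn [fst snd] in E0, Hdd.
  set (ex := xm - xk) in *. set (ey := ym - yk) in *.
  set (vx := xc - xa) in *. set (vy := yc - ya) in *.
  assert (Hd0 : vx^2 + vy^2 <> 0) by lra.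
  split; [|split; [|split]].
  - intros [xp yp] [xq yq]. unfold dist. apply pnorm_congr.
    unfold rig, psub, px, py; cbn [fst snd]. fold ex ey vx vy.
    set (Ep := ex*(xp-xk) + ey*(yp-yk)). set (Eq := ex*(xq-xk) + ey*(yq-yk)).
    set (Cp := ex*(yp-yk) - ey*(xp-xk)). set (Cq := ex*(yq-yk) - ey*(xq-xk)).
    transitivity (((Ep - Eq)^2 + (sg*sg)*(Cp - Cq)^2) * (vx^2+vy^2) / ((vx^2+vy^2)*(vx^2+vy^2))).
    { field. exact Hd0. }
    rewrite Hsg.
    replace ((Ep - Eq)^2 + 1*(Cp - Cq)^2) with ((ex^2+ey^2)*((xp-xq)^2+(yp-yq)^2))
      by (unfold Ep, Eq, Cp, Cq; ring).
    rewrite <- E0. field. rewrite E0; exact Hd0.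
  - unfold rig, px, py; cbn [fst snd]. fold ex ey vx vy. f_equal; field; exact Hd0.
  - unfold rig, px, py; cbn [fst snd]. fold ex ey vx vy. f_equal.
    + transitivity (xa + vx * (ex^2+ey^2) / (vx^2+vy^2)). { field. exact Hd0. }
      rewrite E0. unfold vx. field. exact Hd0.
    + transitivity (ya + vy * (ex^2+ey^2) / (vx^2+vy^2)). { field. exact Hd0. }
      rewrite E0. unfold vy. field. exact Hd0.
  - intros [xp yp]. unfold rig, cross, psub, px, py; cbn [fst snd]. fold ex ey vx vy.
    field. exact Hd0.
Qed.
Definition det4 (a1 b1 c1 d1 a2 b2 c2 d2 a3 b3 c3 d3 a4 b4 c4 d4 : R) : R := ((a1)*(b2*(c3*d4-d3*c4) - c2*(b3*d4-d3*b4) + d2*(b3*c4-c3*b4)) -(b1)*(a2*(c3*d4-d3*c4) - c2*(a3*d4-d3*a4) + d2*(a3*c4-c3*a4)) +(c1)*(a2*(b3*d4-d3*b4) - b2*(a3*d4-d3*a4) + d2*(a3*b4-b3*a4)) -(d1)*(a2*(b3*c4-c3*b4) - b2*(a3*c4-c3*a4) + c2*(a3*b4-b3*a4))).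
Lemma det_sq (a1 b1 c1 d1 a2 b2 c2 d2 a3 b3 c3 d3 a4 b4 c4 d4 : R) (H00 : (a1*a1+a2*a2+a3*a3+a4*a4) = 1) (H01 : (a1*b1+a2*b2+a3*b3+a4*b4) = 0) (H02 : (a1*c1+a2*c2+a3*c3+a4*c4) = 0) (H03 : (a1*d1+a2*d2+a3*d3+a4*d4) = 0) (H11 : (b1*b1+b2*b2+b3*b3+b4*b4) = 1) (H12 : (b1*c1+b2*c2+b3*c3+b4*c4) = 0) (H13 : (b1*d1+b2*d2+b3*d3+b4*d4) = 0) (H22 : (c1*c1+c2*c2+c3*c3+c4*c4) = 1) (H23 : (c1*d1+c2*d2+c3*d3+c4*d4) = 0) (H33 : (d1*d1+d2*d2+d3*d3+d4*d4) = 1) : (det4 a1 b1 c1 d1 a2 b2 c2 d2 a3 b3 c3 d3 a4 b4 c4 d4) * (det4 a1 b1 c1 d1 a2 b2 c2 d2 a3 b3 c3 d3 a4 b4 c4 d4) = 1.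
Proof. replace ((det4 a1 b1 c1 d1 a2 b2 c2 d2 a3 b3 c3 d3 a4 b4 c4 d4)*(det4 a1 b1 c1 d1 a2 b2 c2 d2 a3 b3 c3 d3 a4 b4 c4 d4)) with (((a1*a1+a2*a2+a3*a3+a4*a4))*((b1*b1+b2*b2+b3*b3+b4*b4)*((c1*c1+c2*c2+c3*c3+c4*c4)*(d1*d1+d2*d2+d3*d3+d4*d4)-(c1*d1+c2*d2+c3*d3+c4*d4)*(c1*d1+c2*d2+c3*d3+c4*d4)) - (b1*c1+b2*c2+b3*c3+b4*c4)*((b1*c1+b2*c2+b3*c3+b4*c4)*(d1*d1+d2*d2+d3*d3+d4*d4)-(c1*d1+c2*d2+c3*d3+c4*d4)*(b1*d1+b2*d2+b3*d3+b4*d4)) + (b1*d1+b2*d2+b3*d3+b4*d4)*((b1*c1+b2*c2+b3*c3+b4*c4)*(c1*d1+c2*d2+c3*d3+c4*d4)-(c1*c1+c2*c2+c3*c3+c4*c4)*(b1*d1+b2*d2+b3*d3+b4*d4))) -((a1*b1+a2*b2+a3*b3+a4*b4))*((a1*b1+a2*b2+a3*b3+a4*b4)*((c1*c1+c2*c2+c3*c3+c4*c4)*(d1*d1+d2*d2+d3*d3+d4*d4)-(c1*d1+c2*d2+c3*d3+c4*d4)*(c1*d1+c2*d2+c3*d3+c4*d4)) - (b1*c1+b2*c2+b3*c3+b4*c4)*((a1*c1+a2*c2+a3*c3+a4*c4)*(d1*d1+d2*d2+d3*d3+d4*d4)-(c1*d1+c2*d2+c3*d3+c4*d4)*(a1*d1+a2*d2+a3*d3+a4*d4))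 + (b1*d1+b2*d2+b3*d3+b4*d4)*((a1*c1+a2*c2+a3*c3+a4*c4)*(c1*d1+c2*d2+c3*d3+c4*d4)-(c1*c1+c2*c2+c3*c3+c4*c4)*(a1*d1+a2*d2+a3*d3+a4*d4))) +((a1*c1+a2*c2+a3*c3+a4*c4))*((a1*b1+a2*b2+a3*b3+a4*b4)*((b1*c1+b2*c2+b3*c3+b4*c4)*(d1*d1+d2*d2+d3*d3+d4*d4)-(c1*d1+c2*d2+c3*d3+c4*d4)*(b1*d1+b2*d2+b3*d3+b4*d4)) - (b1*b1+b2*b2+b3*b3+b4*b4)*((a1*c1+a2*c2+a3*c3+a4*c4)*(d1*d1+d2*d2+d3*d3+d4*d4)-(c1*d1+c2*d2+c3*d3+c4*d4)*(a1*d1+a2*d2+a3*d3+a4*d4)) + (b1*d1+b2*d2+b3*d3+b4*d4)*((a1*c1+a2*c2+a3*c3+a4*c4)*(b1*d1+b2*d2+b3*d3+b4*d4)-(b1*c1+b2*c2+b3*c3+b4*c4)*(a1*d1+a2*d2+a3*d3+a4*d4))) -((a1*d1+a2*d2+a3*d3+a4*d4))*((a1*b1+a2*b2+a3*b3+a4*b4)*((b1*c1+b2*c2+b3*c3+b4*c4)*(c1*d1+c2*d2+c3*d3+c4*d4)-(c1*c1+c2*c2+c3*c3+c4*c4)*(b1*d1+b2*d2+b3*d3+b4*d4)) - (b1*b1+b2*b2+b3*b3+b4*b4)*((a1*c1+a2*c2+a3*c3+a4*c4)*(c1*d1+c2*d2+c3*d3+c4*d4)-(c1*c1+c2*c2+c3*c3+c4*c4)*(a1*d1+a2*d2+a3*d3+a4*d4))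 + (b1*c1+b2*c2+b3*c3+b4*c4)*((a1*c1+a2*c2+a3*c3+a4*c4)*(b1*d1+b2*d2+b3*d3+b4*d4)-(b1*c1+b2*c2+b3*c3+b4*c4)*(a1*d1+a2*d2+a3*d3+a4*d4)))) by (unfold det4; ring). rewrite ?H00, ?H01, ?H02, ?H03, ?H11, ?H12, ?H13, ?H22, ?H23, ?H33. ring. Qed.
Lemma cof_00 (a1 b1 c1 d1 a2 b2 c2 d2 a3 b3 c3 d3 a4 b4 c4 d4 : R) (H00 : (a1*a1+a2*a2+a3*a3+a4*a4) = 1) (H01 : (a1*b1+a2*b2+a3*b3+a4*b4) = 0) (H02 : (a1*c1+a2*c2+a3*c3+a4*c4) = 0) (H03 : (a1*d1+a2*d2+a3*d3+a4*d4) = 0) (H11 : (b1*b1+b2*b2+b3*b3+b4*b4) = 1) (H12 : (b1*c1+b2*c2+b3*c3+b4*c4) = 0) (H13 : (b1*d1+b2*d2+b3*d3+b4*d4) = 0) (H22 : (c1*c1+c2*c2+c3*c3+c4*c4) = 1) (H23 : (c1*d1+c2*d2+c3*d3+c4*d4) = 0) (H33 : (d1*d1+d2*d2+d3*d3+d4*d4) = 1) : ((b2*(c3*d4-d3*c4) - c2*(b3*d4-d3*b4) + d2*(b3*c4-c3*b4))) = (det4 a1 b1 c1 d1 a2 b2 c2 d2 a3 b3 c3 d3 a4 b4 c4 d4) * a1.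
Proof. replace ((b2*(c3*d4-d3*c4) - c2*(b3*d4-d3*b4) + d2*(b3*c4-c3*b4))) with ((det4 a1 b1 c1 d1 a2 b2 c2 d2 a3 b3 c3 d3 a4 b4 c4 d4)*a1 + (1 - (a1*a1+a2*a2+a3*a3+a4*a4))*((b2*(c3*d4-d3*c4) - c2*(b3*d4-d3*b4) + d2*(b3*c4-c3*b4))) + (0 - (a1*b1+a2*b2+a3*b3+a4*b4))*(-(a2*(c3*d4-d3*c4) - c2*(a3*d4-d3*a4) + d2*(a3*c4-c3*a4))) + (0 - (a1*c1+a2*c2+a3*c3+a4*c4))*((a2*(b3*d4-d3*b4) - b2*(a3*d4-d3*a4) + d2*(a3*b4-b3*a4))) + (0 - (a1*d1+a2*d2+a3*d3+a4*d4))*(-(a2*(b3*c4-c3*b4) - b2*(a3*c4-c3*a4) + c2*(a3*b4-b3*a4)))) by (unfold det4; ring). rewrite ?H00, ?H01, ?H02, ?H03, ?H11, ?H12, ?H13, ?H22, ?H23, ?H33. ring. Qed.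
Lemma cof_01 (a1 b1 c1 d1 a2 b2 c2 d2 a3 b3 c3 d3 a4 b4 c4 d4 : R) (H00 : (a1*a1+a2*a2+a3*a3+a4*a4) = 1) (H01 : (a1*b1+a2*b2+a3*b3+a4*b4) = 0) (H02 : (a1*c1+a2*c2+a3*c3+a4*c4) = 0) (H03 : (a1*d1+a2*d2+a3*d3+a4*d4) = 0) (H11 : (b1*b1+b2*b2+b3*b3+b4*b4) = 1) (H12 : (b1*c1+b2*c2+b3*c3+b4*c4) = 0) (H13 : (b1*d1+b2*d2+b3*d3+b4*d4) = 0) (H22 : (c1*c1+c2*c2+c3*c3+c4*c4) = 1) (H23 : (c1*d1+c2*d2+c3*d3+c4*d4) = 0) (H33 : (d1*d1+d2*d2+d3*d3+d4*d4) = 1) : (-(a2*(c3*d4-d3*c4) - c2*(a3*d4-d3*a4) + d2*(a3*c4-c3*a4))) = (det4 a1 b1 c1 d1 a2 b2 c2 d2 a3 b3 c3 d3 a4 b4 c4 d4) * b1.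
Proof. replace (-(a2*(c3*d4-d3*c4) - c2*(a3*d4-d3*a4) + d2*(a3*c4-c3*a4))) with ((det4 a1 b1 c1 d1 a2 b2 c2 d2 a3 b3 c3 d3 a4 b4 c4 d4)*b1 + (0 - (a1*b1+a2*b2+a3*b3+a4*b4))*((b2*(c3*d4-d3*c4) - c2*(b3*d4-d3*b4) + d2*(b3*c4-c3*b4))) + (1 - (b1*b1+b2*b2+b3*b3+b4*b4))*(-(a2*(c3*d4-d3*c4) - c2*(a3*d4-d3*a4) + d2*(a3*c4-c3*a4))) + (0 - (b1*c1+b2*c2+b3*c3+b4*c4))*((a2*(b3*d4-d3*b4) - b2*(a3*d4-d3*a4) + d2*(a3*b4-b3*a4))) + (0 - (b1*d1+b2*d2+b3*d3+b4*d4))*(-(a2*(b3*c4-c3*b4) - b2*(a3*c4-c3*a4) + c2*(a3*b4-b3*a4)))) by (unfold det4; ring). rewrite ?H00, ?H01, ?H02, ?H03, ?H11, ?H12, ?H13, ?H22, ?H23, ?H33. ring. Qed.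
Lemma cof_02 (a1 b1 c1 d1 a2 b2 c2 d2 a3 b3 c3 d3 a4 b4 c4 d4 : R) (H00 : (a1*a1+a2*a2+a3*a3+a4*a4) = 1) (H01 : (a1*b1+a2*b2+a3*b3+a4*b4) = 0) (H02 : (a1*c1+a2*c2+a3*c3+a4*c4) = 0) (H03 : (a1*d1+a2*d2+a3*d3+a4*d4) = 0) (H11 : (b1*b1+b2*b2+b3*b3+b4*b4) = 1) (H12 : (b1*c1+b2*c2+b3*c3+b4*c4) = 0) (H13 : (b1*d1+b2*d2+b3*d3+b4*d4) = 0) (H22 : (c1*c1+c2*c2+c3*c3+c4*c4) = 1) (H23 : (c1*d1+c2*d2+c3*d3+c4*d4) = 0) (H33 : (d1*d1+d2*d2+d3*d3+d4*d4) = 1) : ((a2*(b3*d4-d3*b4) - b2*(a3*d4-d3*a4) + d2*(a3*b4-b3*a4))) = (det4 a1 b1 c1 d1 a2 b2 c2 d2 a3 b3 c3 d3 a4 b4 c4 d4) * c1.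
Proof. replace ((a2*(b3*d4-d3*b4) - b2*(a3*d4-d3*a4) + d2*(a3*b4-b3*a4))) with ((det4 a1 b1 c1 d1 a2 b2 c2 d2 a3 b3 c3 d3 a4 b4 c4 d4)*c1 + (0 - (a1*c1+a2*c2+a3*c3+a4*c4))*((b2*(c3*d4-d3*c4) - c2*(b3*d4-d3*b4) + d2*(b3*c4-c3*b4))) + (0 - (b1*c1+b2*c2+b3*c3+b4*c4))*(-(a2*(c3*d4-d3*c4) - c2*(a3*d4-d3*a4) + d2*(a3*c4-c3*a4))) + (1 - (c1*c1+c2*c2+c3*c3+c4*c4))*((a2*(b3*d4-d3*b4) - b2*(a3*d4-d3*a4) + d2*(a3*b4-b3*a4))) + (0 - (c1*d1+c2*d2+c3*d3+c4*d4))*(-(a2*(b3*c4-c3*b4) - b2*(a3*c4-c3*a4) + c2*(a3*b4-b3*a4)))) by (unfold det4; ring). rewrite ?H00, ?H01, ?H02, ?H03, ?H11, ?H12, ?H13, ?H22, ?H23, ?H33. ring. Qed.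
Lemma cof_03 (a1 b1 c1 d1 a2 b2 c2 d2 a3 b3 c3 d3 a4 b4 c4 d4 : R) (H00 : (a1*a1+a2*a2+a3*a3+a4*a4) = 1) (H01 : (a1*b1+a2*b2+a3*b3+a4*b4) = 0) (H02 : (a1*c1+a2*c2+a3*c3+a4*c4) = 0) (H03 : (a1*d1+a2*d2+a3*d3+a4*d4) = 0) (H11 : (b1*b1+b2*b2+b3*b3+b4*b4) = 1) (H12 : (b1*c1+b2*c2+b3*c3+b4*c4) = 0) (H13 : (b1*d1+b2*d2+b3*d3+b4*d4) = 0) (H22 : (c1*c1+c2*c2+c3*c3+c4*c4) = 1) (H23 : (c1*d1+c2*d2+c3*d3+c4*d4) = 0) (H33 : (d1*d1+d2*d2+d3*d3+d4*d4) = 1) : (-(a2*(b3*c4-c3*b4) - b2*(a3*c4-c3*a4) + c2*(a3*b4-b3*a4))) = (det4 a1 b1 c1 d1 a2 b2 c2 d2 a3 b3 c3 d3 a4 b4 c4 d4) * d1.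
Proof. replace (-(a2*(b3*c4-c3*b4) - b2*(a3*c4-c3*a4) + c2*(a3*b4-b3*a4))) with ((det4 a1 b1 c1 d1 a2 b2 c2 d2 a3 b3 c3 d3 a4 b4 c4 d4)*d1 + (0 - (a1*d1+a2*d2+a3*d3+a4*d4))*((b2*(c3*d4-d3*c4) - c2*(b3*d4-d3*b4) + d2*(b3*c4-c3*b4))) + (0 - (b1*d1+b2*d2+b3*d3+b4*d4))*(-(a2*(c3*d4-d3*c4) - c2*(a3*d4-d3*a4) + d2*(a3*c4-c3*a4))) + (0 - (c1*d1+c2*d2+c3*d3+c4*d4))*((a2*(b3*d4-d3*b4) - b2*(a3*d4-d3*a4) + d2*(a3*b4-b3*a4))) + (1 - (d1*d1+d2*d2+d3*d3+d4*d4))*(-(a2*(b3*c4-c3*b4) - b2*(a3*c4-c3*a4) + c2*(a3*b4-b3*a4)))) by (unfold det4; ring). rewrite ?H00, ?H01, ?H02, ?H03, ?H11, ?H12, ?H13, ?H22, ?H23, ?H33. ring. Qed.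
Lemma cof_10 (a1 b1 c1 d1 a2 b2 c2 d2 a3 b3 c3 d3 a4 b4 c4 d4 : R) (H00 : (a1*a1+a2*a2+a3*a3+a4*a4) = 1) (H01 : (a1*b1+a2*b2+a3*b3+a4*b4) = 0) (H02 : (a1*c1+a2*c2+a3*c3+a4*c4) = 0) (H03 : (a1*d1+a2*d2+a3*d3+a4*d4) = 0) (H11 : (b1*b1+b2*b2+b3*b3+b4*b4) = 1) (H12 : (b1*c1+b2*c2+b3*c3+b4*c4) = 0) (H13 : (b1*d1+b2*d2+b3*d3+b4*d4) = 0) (H22 : (c1*c1+c2*c2+c3*c3+c4*c4) = 1) (H23 : (c1*d1+c2*d2+c3*d3+c4*d4) = 0) (H33 : (d1*d1+d2*d2+d3*d3+d4*d4) = 1) : (-(b1*(c3*d4-d3*c4) - c1*(b3*d4-d3*b4) + d1*(b3*c4-c3*b4))) = (det4 a1 b1 c1 d1 a2 b2 c2 d2 a3 b3 c3 d3 a4 b4 c4 d4) * a2.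
Proof. replace (-(b1*(c3*d4-d3*c4) - c1*(b3*d4-d3*b4) + d1*(b3*c4-c3*b4))) with ((det4 a1 b1 c1 d1 a2 b2 c2 d2 a3 b3 c3 d3 a4 b4 c4 d4)*a2 + (1 - (a1*a1+a2*a2+a3*a3+a4*a4))*(-(b1*(c3*d4-d3*c4) - c1*(b3*d4-d3*b4) + d1*(b3*c4-c3*b4))) + (0 - (a1*b1+a2*b2+a3*b3+a4*b4))*((a1*(c3*d4-d3*c4) - c1*(a3*d4-d3*a4) + d1*(a3*c4-c3*a4))) + (0 - (a1*c1+a2*c2+a3*c3+a4*c4))*(-(a1*(b3*d4-d3*b4) - b1*(a3*d4-d3*a4) + d1*(a3*b4-b3*a4))) + (0 - (a1*d1+a2*d2+a3*d3+a4*d4))*((a1*(b3*c4-c3*b4) - b1*(a3*c4-c3*a4) + c1*(a3*b4-b3*a4)))) by (unfold det4; ring). rewrite ?H00, ?H01, ?H02, ?H03, ?H11, ?H12, ?H13, ?H22, ?H23, ?H33. ring. Qed.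
Lemma cof_11 (a1 b1 c1 d1 a2 b2 c2 d2 a3 b3 c3 d3 a4 b4 c4 d4 : R) (H00 : (a1*a1+a2*a2+a3*a3+a4*a4) = 1) (H01 : (a1*b1+a2*b2+a3*b3+a4*b4) = 0) (H02 : (a1*c1+a2*c2+a3*c3+a4*c4) = 0) (H03 : (a1*d1+a2*d2+a3*d3+a4*d4) = 0) (H11 : (b1*b1+b2*b2+b3*b3+b4*b4) = 1) (H12 : (b1*c1+b2*c2+b3*c3+b4*c4) = 0) (H13 : (b1*d1+b2*d2+b3*d3+b4*d4) = 0) (H22 : (c1*c1+c2*c2+c3*c3+c4*c4) = 1) (H23 : (c1*d1+c2*d2+c3*d3+c4*d4) = 0) (H33 : (d1*d1+d2*d2+d3*d3+d4*d4) = 1) : ((a1*(c3*d4-d3*c4) - c1*(a3*d4-d3*a4) + d1*(a3*c4-c3*a4))) = (det4 a1 b1 c1 d1 a2 b2 c2 d2 a3 b3 c3 d3 a4 b4 c4 d4) * b2.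
Proof. replace ((a1*(c3*d4-d3*c4) - c1*(a3*d4-d3*a4) + d1*(a3*c4-c3*a4))) with ((det4 a1 b1 c1 d1 a2 b2 c2 d2 a3 b3 c3 d3 a4 b4 c4 d4)*b2 + (0 - (a1*b1+a2*b2+a3*b3+a4*b4))*(-(b1*(c3*d4-d3*c4) - c1*(b3*d4-d3*b4) + d1*(b3*c4-c3*b4))) + (1 - (b1*b1+b2*b2+b3*b3+b4*b4))*((a1*(c3*d4-d3*c4) - c1*(a3*d4-d3*a4) + d1*(a3*c4-c3*a4))) + (0 - (b1*c1+b2*c2+b3*c3+b4*c4))*(-(a1*(b3*d4-d3*b4) - b1*(a3*d4-d3*a4) + d1*(a3*b4-b3*a4))) + (0 - (b1*d1+b2*d2+b3*d3+b4*d4))*((a1*(b3*c4-c3*b4) - b1*(a3*c4-c3*a4) + c1*(a3*b4-b3*a4)))) by (unfold det4; ring). rewrite ?H00, ?H01, ?H02, ?H03, ?H11, ?H12, ?H13, ?H22, ?H23, ?H33. ring. Qed.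
Lemma cof_12 (a1 b1 c1 d1 a2 b2 c2 d2 a3 b3 c3 d3 a4 b4 c4 d4 : R) (H00 : (a1*a1+a2*a2+a3*a3+a4*a4) = 1) (H01 : (a1*b1+a2*b2+a3*b3+a4*b4) = 0) (H02 : (a1*c1+a2*c2+a3*c3+a4*c4) = 0) (H03 : (a1*d1+a2*d2+a3*d3+a4*d4) = 0) (H11 : (b1*b1+b2*b2+b3*b3+b4*b4) = 1) (H12 : (b1*c1+b2*c2+b3*c3+b4*c4) = 0) (H13 : (b1*d1+b2*d2+b3*d3+b4*d4) = 0) (H22 : (c1*c1+c2*c2+c3*c3+c4*c4) = 1) (H23 : (c1*d1+c2*d2+c3*d3+c4*d4) = 0) (H33 : (d1*d1+d2*d2+d3*d3+d4*d4) = 1) : (-(a1*(b3*d4-d3*b4) - b1*(a3*d4-d3*a4) + d1*(a3*b4-b3*a4))) = (det4 a1 b1 c1 d1 a2 b2 c2 d2 a3 b3 c3 d3 a4 b4 c4 d4) * c2.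
Proof. replace (-(a1*(b3*d4-d3*b4) - b1*(a3*d4-d3*a4) + d1*(a3*b4-b3*a4))) with ((det4 a1 b1 c1 d1 a2 b2 c2 d2 a3 b3 c3 d3 a4 b4 c4 d4)*c2 + (0 - (a1*c1+a2*c2+a3*c3+a4*c4))*(-(b1*(c3*d4-d3*c4) - c1*(b3*d4-d3*b4) + d1*(b3*c4-c3*b4))) + (0 - (b1*c1+b2*c2+b3*c3+b4*c4))*((a1*(c3*d4-d3*c4) - c1*(a3*d4-d3*a4) + d1*(a3*c4-c3*a4))) + (1 - (c1*c1+c2*c2+c3*c3+c4*c4))*(-(a1*(b3*d4-d3*b4) - b1*(a3*d4-d3*a4) + d1*(a3*b4-b3*a4))) + (0 - (c1*d1+c2*d2+c3*d3+c4*d4))*((a1*(b3*c4-c3*b4) - b1*(a3*c4-c3*a4) + c1*(a3*b4-b3*a4)))) by (unfold det4; ring). rewrite ?H00, ?H01, ?H02, ?H03, ?H11, ?H12, ?H13, ?H22, ?H23, ?H33. ring. Qed.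
Lemma cof_13 (a1 b1 c1 d1 a2 b2 c2 d2 a3 b3 c3 d3 a4 b4 c4 d4 : R) (H00 : (a1*a1+a2*a2+a3*a3+a4*a4) = 1) (H01 : (a1*b1+a2*b2+a3*b3+a4*b4) = 0) (H02 : (a1*c1+a2*c2+a3*c3+a4*c4) = 0) (H03 : (a1*d1+a2*d2+a3*d3+a4*d4) = 0) (H11 : (b1*b1+b2*b2+b3*b3+b4*b4) = 1) (H12 : (b1*c1+b2*c2+b3*c3+b4*c4) = 0) (H13 : (b1*d1+b2*d2+b3*d3+b4*d4) = 0) (H22 : (c1*c1+c2*c2+c3*c3+c4*c4) = 1) (H23 : (c1*d1+c2*d2+c3*d3+c4*d4) = 0) (H33 : (d1*d1+d2*d2+d3*d3+d4*d4) = 1) : ((a1*(b3*c4-c3*b4) - b1*(a3*c4-c3*a4) + c1*(a3*b4-b3*a4))) = (det4 a1 b1 c1 d1 a2 b2 c2 d2 a3 b3 c3 d3 a4 b4 c4 d4) * d2.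
Proof. replace ((a1*(b3*c4-c3*b4) - b1*(a3*c4-c3*a4) + c1*(a3*b4-b3*a4))) with ((det4 a1 b1 c1 d1 a2 b2 c2 d2 a3 b3 c3 d3 a4 b4 c4 d4)*d2 + (0 - (a1*d1+a2*d2+a3*d3+a4*d4))*(-(b1*(c3*d4-d3*c4) - c1*(b3*d4-d3*b4) + d1*(b3*c4-c3*b4))) + (0 - (b1*d1+b2*d2+b3*d3+b4*d4))*((a1*(c3*d4-d3*c4) - c1*(a3*d4-d3*a4) + d1*(a3*c4-c3*a4))) + (0 - (c1*d1+c2*d2+c3*d3+c4*d4))*(-(a1*(b3*d4-d3*b4) - b1*(a3*d4-d3*a4) + d1*(a3*b4-b3*a4))) + (1 - (d1*d1+d2*d2+d3*d3+d4*d4))*((a1*(b3*c4-c3*b4) - b1*(a3*c4-c3*a4) + c1*(a3*b4-b3*a4)))) by (unfold det4; ring). rewrite ?H00, ?H01, ?H02, ?H03, ?H11, ?H12, ?H13, ?H22, ?H23, ?H33. ring. Qed.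
Lemma cof_20 (a1 b1 c1 d1 a2 b2 c2 d2 a3 b3 c3 d3 a4 b4 c4 d4 : R) (H00 : (a1*a1+a2*a2+a3*a3+a4*a4) = 1) (H01 : (a1*b1+a2*b2+a3*b3+a4*b4) = 0) (H02 : (a1*c1+a2*c2+a3*c3+a4*c4) = 0) (H03 : (a1*d1+a2*d2+a3*d3+a4*d4) = 0) (H11 : (b1*b1+b2*b2+b3*b3+b4*b4) = 1) (H12 : (b1*c1+b2*c2+b3*c3+b4*c4) = 0) (H13 : (b1*d1+b2*d2+b3*d3+b4*d4) = 0) (H22 : (c1*c1+c2*c2+c3*c3+c4*c4) = 1) (H23 : (c1*d1+c2*d2+c3*d3+c4*d4) = 0) (H33 : (d1*d1+d2*d2+d3*d3+d4*d4) = 1) : ((b1*(c2*d4-d2*c4) - c1*(b2*d4-d2*b4) + d1*(b2*c4-c2*b4))) = (det4 a1 b1 c1 d1 a2 b2 c2 d2 a3 b3 c3 d3 a4 b4 c4 d4) * a3.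
Proof. replace ((b1*(c2*d4-d2*c4) - c1*(b2*d4-d2*b4) + d1*(b2*c4-c2*b4))) with ((det4 a1 b1 c1 d1 a2 b2 c2 d2 a3 b3 c3 d3 a4 b4 c4 d4)*a3 + (1 - (a1*a1+a2*a2+a3*a3+a4*a4))*((b1*(c2*d4-d2*c4) - c1*(b2*d4-d2*b4) + d1*(b2*c4-c2*b4))) + (0 - (a1*b1+a2*b2+a3*b3+a4*b4))*(-(a1*(c2*d4-d2*c4) - c1*(a2*d4-d2*a4) + d1*(a2*c4-c2*a4))) + (0 - (a1*c1+a2*c2+a3*c3+a4*c4))*((a1*(b2*d4-d2*b4) - b1*(a2*d4-d2*a4) + d1*(a2*b4-b2*a4))) + (0 - (a1*d1+a2*d2+a3*d3+a4*d4))*(-(a1*(b2*c4-c2*b4) - b1*(a2*c4-c2*a4) + c1*(a2*b4-b2*a4)))) by (unfold det4; ring). rewrite ?H00, ?H01, ?H02, ?H03, ?H11, ?H12, ?H13, ?H22, ?H23, ?H33. ring. Qed.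
Lemma cof_21 (a1 b1 c1 d1 a2 b2 c2 d2 a3 b3 c3 d3 a4 b4 c4 d4 : R) (H00 : (a1*a1+a2*a2+a3*a3+a4*a4) = 1) (H01 : (a1*b1+a2*b2+a3*b3+a4*b4) = 0) (H02 : (a1*c1+a2*c2+a3*c3+a4*c4) = 0) (H03 : (a1*d1+a2*d2+a3*d3+a4*d4) = 0) (H11 : (b1*b1+b2*b2+b3*b3+b4*b4) = 1) (H12 : (b1*c1+b2*c2+b3*c3+b4*c4) = 0) (H13 : (b1*d1+b2*d2+b3*d3+b4*d4) = 0) (H22 : (c1*c1+c2*c2+c3*c3+c4*c4) = 1) (H23 : (c1*d1+c2*d2+c3*d3+c4*d4) = 0) (H33 : (d1*d1+d2*d2+d3*d3+d4*d4) = 1) : (-(a1*(c2*d4-d2*c4) - c1*(a2*d4-d2*a4) + d1*(a2*c4-c2*a4))) = (det4 a1 b1 c1 d1 a2 b2 c2 d2 a3 b3 c3 d3 a4 b4 c4 d4) * b3.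
Proof. replace (-(a1*(c2*d4-d2*c4) - c1*(a2*d4-d2*a4) + d1*(a2*c4-c2*a4))) with ((det4 a1 b1 c1 d1 a2 b2 c2 d2 a3 b3 c3 d3 a4 b4 c4 d4)*b3 + (0 - (a1*b1+a2*b2+a3*b3+a4*b4))*((b1*(c2*d4-d2*c4) - c1*(b2*d4-d2*b4) + d1*(b2*c4-c2*b4))) + (1 - (b1*b1+b2*b2+b3*b3+b4*b4))*(-(a1*(c2*d4-d2*c4) - c1*(a2*d4-d2*a4) + d1*(a2*c4-c2*a4))) + (0 - (b1*c1+b2*c2+b3*c3+b4*c4))*((a1*(b2*d4-d2*b4) - b1*(a2*d4-d2*a4) + d1*(a2*b4-b2*a4))) + (0 - (b1*d1+b2*d2+b3*d3+b4*d4))*(-(a1*(b2*c4-c2*b4) - b1*(a2*c4-c2*a4) + c1*(a2*b4-b2*a4)))) by (unfold det4; ring). rewrite ?H00, ?H01, ?H02, ?H03, ?H11, ?H12, ?H13, ?H22, ?H23, ?H33. ring. Qed.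
Lemma cof_22 (a1 b1 c1 d1 a2 b2 c2 d2 a3 b3 c3 d3 a4 b4 c4 d4 : R) (H00 : (a1*a1+a2*a2+a3*a3+a4*a4) = 1) (H01 : (a1*b1+a2*b2+a3*b3+a4*b4) = 0) (H02 : (a1*c1+a2*c2+a3*c3+a4*c4) = 0) (H03 : (a1*d1+a2*d2+a3*d3+a4*d4) = 0) (H11 : (b1*b1+b2*b2+b3*b3+b4*b4) = 1) (H12 : (b1*c1+b2*c2+b3*c3+b4*c4) = 0) (H13 : (b1*d1+b2*d2+b3*d3+b4*d4) = 0) (H22 : (c1*c1+c2*c2+c3*c3+c4*c4) = 1) (H23 : (c1*d1+c2*d2+c3*d3+c4*d4) = 0) (H33 : (d1*d1+d2*d2+d3*d3+d4*d4) = 1) : ((a1*(b2*d4-d2*b4) - b1*(a2*d4-d2*a4) + d1*(a2*b4-b2*a4))) = (det4 a1 b1 c1 d1 a2 b2 c2 d2 a3 b3 c3 d3 a4 b4 c4 d4) * c3.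
Proof. replace ((a1*(b2*d4-d2*b4) - b1*(a2*d4-d2*a4) + d1*(a2*b4-b2*a4))) with ((det4 a1 b1 c1 d1 a2 b2 c2 d2 a3 b3 c3 d3 a4 b4 c4 d4)*c3 + (0 - (a1*c1+a2*c2+a3*c3+a4*c4))*((b1*(c2*d4-d2*c4) - c1*(b2*d4-d2*b4) + d1*(b2*c4-c2*b4))) + (0 - (b1*c1+b2*c2+b3*c3+b4*c4))*(-(a1*(c2*d4-d2*c4) - c1*(a2*d4-d2*a4) + d1*(a2*c4-c2*a4))) + (1 - (c1*c1+c2*c2+c3*c3+c4*c4))*((a1*(b2*d4-d2*b4) - b1*(a2*d4-d2*a4) + d1*(a2*b4-b2*a4))) + (0 - (c1*d1+c2*d2+c3*d3+c4*d4))*(-(a1*(b2*c4-c2*b4) - b1*(a2*c4-c2*a4) + c1*(a2*b4-b2*a4)))) by (unfold det4; ring). rewrite ?H00, ?H01, ?H02, ?H03, ?H11, ?H12, ?H13, ?H22, ?H23, ?H33. ring. Qed.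
Lemma cof_23 (a1 b1 c1 d1 a2 b2 c2 d2 a3 b3 c3 d3 a4 b4 c4 d4 : R) (H00 : (a1*a1+a2*a2+a3*a3+a4*a4) = 1) (H01 : (a1*b1+a2*b2+a3*b3+a4*b4) = 0) (H02 : (a1*c1+a2*c2+a3*c3+a4*c4) = 0) (H03 : (a1*d1+a2*d2+a3*d3+a4*d4) = 0) (H11 : (b1*b1+b2*b2+b3*b3+b4*b4) = 1) (H12 : (b1*c1+b2*c2+b3*c3+b4*c4) = 0) (H13 : (b1*d1+b2*d2+b3*d3+b4*d4) = 0) (H22 : (c1*c1+c2*c2+c3*c3+c4*c4) = 1) (H23 : (c1*d1+c2*d2+c3*d3+c4*d4) = 0) (H33 : (d1*d1+d2*d2+d3*d3+d4*d4) = 1) : (-(a1*(b2*c4-c2*b4) - b1*(a2*c4-c2*a4) + c1*(a2*b4-b2*a4))) = (det4 a1 b1 c1 d1 a2 b2 c2 d2 a3 b3 c3 d3 a4 b4 c4 d4) * d3.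
Proof. replace (-(a1*(b2*c4-c2*b4) - b1*(a2*c4-c2*a4) + c1*(a2*b4-b2*a4))) with ((det4 a1 b1 c1 d1 a2 b2 c2 d2 a3 b3 c3 d3 a4 b4 c4 d4)*d3 + (0 - (a1*d1+a2*d2+a3*d3+a4*d4))*((b1*(c2*d4-d2*c4) - c1*(b2*d4-d2*b4) + d1*(b2*c4-c2*b4))) + (0 - (b1*d1+b2*d2+b3*d3+b4*d4))*(-(a1*(c2*d4-d2*c4) - c1*(a2*d4-d2*a4) + d1*(a2*c4-c2*a4))) + (0 - (c1*d1+c2*d2+c3*d3+c4*d4))*((a1*(b2*d4-d2*b4) - b1*(a2*d4-d2*a4) + d1*(a2*b4-b2*a4))) + (1 - (d1*d1+d2*d2+d3*d3+d4*d4))*(-(a1*(b2*c4-c2*b4) - b1*(a2*c4-c2*a4) + c1*(a2*b4-b2*a4)))) by (unfold det4; ring). rewrite ?H00, ?H01, ?H02, ?H03, ?H11, ?H12, ?H13, ?H22, ?H23, ?H33. ring. Qed.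
Lemma cof_30 (a1 b1 c1 d1 a2 b2 c2 d2 a3 b3 c3 d3 a4 b4 c4 d4 : R) (H00 : (a1*a1+a2*a2+a3*a3+a4*a4) = 1) (H01 : (a1*b1+a2*b2+a3*b3+a4*b4) = 0) (H02 : (a1*c1+a2*c2+a3*c3+a4*c4) = 0) (H03 : (a1*d1+a2*d2+a3*d3+a4*d4) = 0) (H11 : (b1*b1+b2*b2+b3*b3+b4*b4) = 1) (H12 : (b1*c1+b2*c2+b3*c3+b4*c4) = 0) (H13 : (b1*d1+b2*d2+b3*d3+b4*d4) = 0) (H22 : (c1*c1+c2*c2+c3*c3+c4*c4) = 1) (H23 : (c1*d1+c2*d2+c3*d3+c4*d4) = 0) (H33 : (d1*d1+d2*d2+d3*d3+d4*d4) = 1) : (-(b1*(c2*d3-d2*c3) - c1*(b2*d3-d2*b3) + d1*(b2*c3-c2*b3))) = (det4 a1 b1 c1 d1 a2 b2 c2 d2 a3 b3 c3 d3 a4 b4 c4 d4) * a4.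
Proof. replace (-(b1*(c2*d3-d2*c3) - c1*(b2*d3-d2*b3) + d1*(b2*c3-c2*b3))) with ((det4 a1 b1 c1 d1 a2 b2 c2 d2 a3 b3 c3 d3 a4 b4 c4 d4)*a4 + (1 - (a1*a1+a2*a2+a3*a3+a4*a4))*(-(b1*(c2*d3-d2*c3) - c1*(b2*d3-d2*b3) + d1*(b2*c3-c2*b3))) + (0 - (a1*b1+a2*b2+a3*b3+a4*b4))*((a1*(c2*d3-d2*c3) - c1*(a2*d3-d2*a3) + d1*(a2*c3-c2*a3))) + (0 - (a1*c1+a2*c2+a3*c3+a4*c4))*(-(a1*(b2*d3-d2*b3) - b1*(a2*d3-d2*a3) + d1*(a2*b3-b2*a3))) + (0 - (a1*d1+a2*d2+a3*d3+a4*d4))*((a1*(b2*c3-c2*b3) - b1*(a2*c3-c2*a3) + c1*(a2*b3-b2*a3)))) by (unfold det4; ring). rewrite ?H00, ?H01, ?H02, ?H03, ?H11, ?H12, ?H13, ?H22, ?H23, ?H33. ring. Qed.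
Lemma cof_31 (a1 b1 c1 d1 a2 b2 c2 d2 a3 b3 c3 d3 a4 b4 c4 d4 : R) (H00 : (a1*a1+a2*a2+a3*a3+a4*a4) = 1) (H01 : (a1*b1+a2*b2+a3*b3+a4*b4) = 0) (H02 : (a1*c1+a2*c2+a3*c3+a4*c4) = 0) (H03 : (a1*d1+a2*d2+a3*d3+a4*d4) = 0) (H11 : (b1*b1+b2*b2+b3*b3+b4*b4) = 1) (H12 : (b1*c1+b2*c2+b3*c3+b4*c4) = 0) (H13 : (b1*d1+b2*d2+b3*d3+b4*d4) = 0) (H22 : (c1*c1+c2*c2+c3*c3+c4*c4) = 1) (H23 : (c1*d1+c2*d2+c3*d3+c4*d4) = 0) (H33 : (d1*d1+d2*d2+d3*d3+d4*d4) = 1) : ((a1*(c2*d3-d2*c3) - c1*(a2*d3-d2*a3) + d1*(a2*c3-c2*a3))) = (det4 a1 b1 c1 d1 a2 b2 c2 d2 a3 b3 c3 d3 a4 b4 c4 d4) * b4.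
Proof. replace ((a1*(c2*d3-d2*c3) - c1*(a2*d3-d2*a3) + d1*(a2*c3-c2*a3))) with ((det4 a1 b1 c1 d1 a2 b2 c2 d2 a3 b3 c3 d3 a4 b4 c4 d4)*b4 + (0 - (a1*b1+a2*b2+a3*b3+a4*b4))*(-(b1*(c2*d3-d2*c3) - c1*(b2*d3-d2*b3) + d1*(b2*c3-c2*b3))) + (1 - (b1*b1+b2*b2+b3*b3+b4*b4))*((a1*(c2*d3-d2*c3) - c1*(a2*d3-d2*a3) + d1*(a2*c3-c2*a3))) + (0 - (b1*c1+b2*c2+b3*c3+b4*c4))*(-(a1*(b2*d3-d2*b3) - b1*(a2*d3-d2*a3) + d1*(a2*b3-b2*a3))) + (0 - (b1*d1+b2*d2+b3*d3+b4*d4))*((a1*(b2*c3-c2*b3) - b1*(a2*c3-c2*a3) + c1*(a2*b3-b2*a3)))) by (unfold det4; ring). rewrite ?H00, ?H01, ?H02, ?H03, ?H11, ?H12, ?H13, ?H22, ?H23, ?H33. ring. Qed.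
Lemma cof_32 (a1 b1 c1 d1 a2 b2 c2 d2 a3 b3 c3 d3 a4 b4 c4 d4 : R) (H00 : (a1*a1+a2*a2+a3*a3+a4*a4) = 1) (H01 : (a1*b1+a2*b2+a3*b3+a4*b4) = 0) (H02 : (a1*c1+a2*c2+a3*c3+a4*c4) = 0) (H03 : (a1*d1+a2*d2+a3*d3+a4*d4) = 0) (H11 : (b1*b1+b2*b2+b3*b3+b4*b4) = 1) (H12 : (b1*c1+b2*c2+b3*c3+b4*c4) = 0) (H13 : (b1*d1+b2*d2+b3*d3+b4*d4) = 0) (H22 : (c1*c1+c2*c2+c3*c3+c4*c4) = 1) (H23 : (c1*d1+c2*d2+c3*d3+c4*d4) = 0) (H33 : (d1*d1+d2*d2+d3*d3+d4*d4) = 1) : (-(a1*(b2*d3-d2*b3) - b1*(a2*d3-d2*a3) + d1*(a2*b3-b2*a3))) = (det4 a1 b1 c1 d1 a2 b2 c2 d2 a3 b3 c3 d3 a4 b4 c4 d4) * c4.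
Proof. replace (-(a1*(b2*d3-d2*b3) - b1*(a2*d3-d2*a3) + d1*(a2*b3-b2*a3))) with ((det4 a1 b1 c1 d1 a2 b2 c2 d2 a3 b3 c3 d3 a4 b4 c4 d4)*c4 + (0 - (a1*c1+a2*c2+a3*c3+a4*c4))*(-(b1*(c2*d3-d2*c3) - c1*(b2*d3-d2*b3) + d1*(b2*c3-c2*b3))) + (0 - (b1*c1+b2*c2+b3*c3+b4*c4))*((a1*(c2*d3-d2*c3) - c1*(a2*d3-d2*a3) + d1*(a2*c3-c2*a3))) + (1 - (c1*c1+c2*c2+c3*c3+c4*c4))*(-(a1*(b2*d3-d2*b3) - b1*(a2*d3-d2*a3) + d1*(a2*b3-b2*a3))) + (0 - (c1*d1+c2*d2+c3*d3+c4*d4))*((a1*(b2*c3-c2*b3) - b1*(a2*c3-c2*a3) + c1*(a2*b3-b2*a3)))) by (unfold det4; ring). rewrite ?H00, ?H01, ?H02, ?H03, ?H11, ?H12, ?H13, ?H22, ?H23, ?H33. ring. Qed.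
Lemma cof_33 (a1 b1 c1 d1 a2 b2 c2 d2 a3 b3 c3 d3 a4 b4 c4 d4 : R) (H00 : (a1*a1+a2*a2+a3*a3+a4*a4) = 1) (H01 : (a1*b1+a2*b2+a3*b3+a4*b4) = 0) (H02 : (a1*c1+a2*c2+a3*c3+a4*c4) = 0) (H03 : (a1*d1+a2*d2+a3*d3+a4*d4) = 0) (H11 : (b1*b1+b2*b2+b3*b3+b4*b4) = 1) (H12 : (b1*c1+b2*c2+b3*c3+b4*c4) = 0) (H13 : (b1*d1+b2*d2+b3*d3+b4*d4) = 0) (H22 : (c1*c1+c2*c2+c3*c3+c4*c4) = 1) (H23 : (c1*d1+c2*d2+c3*d3+c4*d4) = 0) (H33 : (d1*d1+d2*d2+d3*d3+d4*d4) = 1) : ((a1*(b2*c3-c2*b3) - b1*(a2*c3-c2*a3) + c1*(a2*b3-b2*a3))) = (det4 a1 b1 c1 d1 a2 b2 c2 d2 a3 b3 c3 d3 a4 b4 c4 d4) * d4.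
Proof. replace ((a1*(b2*c3-c2*b3) - b1*(a2*c3-c2*a3) + c1*(a2*b3-b2*a3))) with ((det4 a1 b1 c1 d1 a2 b2 c2 d2 a3 b3 c3 d3 a4 b4 c4 d4)*d4 + (0 - (a1*d1+a2*d2+a3*d3+a4*d4))*(-(b1*(c2*d3-d2*c3) - c1*(b2*d3-d2*b3) + d1*(b2*c3-c2*b3))) + (0 - (b1*d1+b2*d2+b3*d3+b4*d4))*((a1*(c2*d3-d2*c3) - c1*(a2*d3-d2*a3) + d1*(a2*c3-c2*a3))) + (0 - (c1*d1+c2*d2+c3*d3+c4*d4))*(-(a1*(b2*d3-d2*b3) - b1*(a2*d3-d2*a3) + d1*(a2*b3-b2*a3))) + (1 - (d1*d1+d2*d2+d3*d3+d4*d4))*((a1*(b2*c3-c2*b3) - b1*(a2*c3-c2*a3) + c1*(a2*b3-b2*a3)))) by (unfold det4; ring). rewrite ?H00, ?H01, ?H02, ?H03, ?H11, ?H12, ?H13, ?H22, ?H23, ?H33. ring. Qed.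
Lemma ortho4 (a1 b1 c1 d1 a2 b2 c2 d2 a3 b3 c3 d3 a4 b4 c4 d4 : R) (H00 : (a1*a1+a2*a2+a3*a3+a4*a4) = 1) (H01 : (a1*b1+a2*b2+a3*b3+a4*b4) = 0) (H02 : (a1*c1+a2*c2+a3*c3+a4*c4) = 0) (H03 : (a1*d1+a2*d2+a3*d3+a4*d4) = 0) (H11 : (b1*b1+b2*b2+b3*b3+b4*b4) = 1) (H12 : (b1*c1+b2*c2+b3*c3+b4*c4) = 0) (H13 : (b1*d1+b2*d2+b3*d3+b4*d4) = 0) (H22 : (c1*c1+c2*c2+c3*c3+c4*c4) = 1) (H23 : (c1*d1+c2*d2+c3*d3+c4*d4) = 0) (H33 : (d1*d1+d2*d2+d3*d3+d4*d4) = 1) : (a1*a1+b1*b1+c1*c1+d1*d1) = 1 /\ (a2*a2+b2*b2+c2*c2+d2*d2) = 1 /\ (a3*a3+b3*b3+c3*c3+d3*d3) = 1 /\ (a4*a4+b4*b4+c4*c4+d4*d4) = 1 /\ (a1*a2+b1*b2+c1*c2+d1*d2) = 0 /\ (a3*a4+b3*b4+c3*c4+d3*d4) = 0 /\ (c1*d2-d1*c2)*(c3*d4-d3*c4) = (a1*b2-b1*a2)*(a3*b4-b3*a4).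
Proof.
pose proof (det_sq a1 b1 c1 d1 a2 b2 c2 d2 a3 b3 c3 d3 a4 b4 c4 d4 H00 H01 H02 H03 H11 H12 H13 H22 H23 H33) as HD.
pose proof (cof_00 a1 b1 c1 d1 a2 b2 c2 d2 a3 b3 c3 d3 a4 b4 c4 d4 H00 H01 H02 H03 H11 H12 H13 H22 H23 H33) as C00.
pose proof (cof_01 a1 b1 c1 d1 a2 b2 c2 d2 a3 b3 c3 d3 a4 b4 c4 d4 H00 H01 H02 H03 H11 H12 H13 H22 H23 H33) as C01.
pose proof (cof_02 a1 b1 c1 d1 a2 b2 c2 d2 a3 b3 c3 d3 a4 b4 c4 d4 H00 H01 H02 H03 H11 H12 H13 H22 H23 H33) as C02.
pose proof (cof_03 a1 b1 c1 d1 a2 b2 c2 d2 a3 b3 c3 d3 a4 b4 c4 d4 H00 H01 H02 H03 H11 H12 H13 H22 H23 H33) as C03.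
pose proof (cof_10 a1 b1 c1 d1 a2 b2 c2 d2 a3 b3 c3 d3 a4 b4 c4 d4 H00 H01 H02 H03 H11 H12 H13 H22 H23 H33) as C10.
pose proof (cof_11 a1 b1 c1 d1 a2 b2 c2 d2 a3 b3 c3 d3 a4 b4 c4 d4 H00 H01 H02 H03 H11 H12 H13 H22 H23 H33) as C11.
pose proof (cof_12 a1 b1 c1 d1 a2 b2 c2 d2 a3 b3 c3 d3 a4 b4 c4 d4 H00 H01 H02 H03 H11 H12 H13 H22 H23 H33) as C12.
pose proof (cof_13 a1 b1 c1 d1 a2 b2 c2 d2 a3 b3 c3 d3 a4 b4 c4 d4 H00 H01 H02 H03 H11 H12 H13 H22 H23 H33) as C13.
pose proof (cof_20 a1 b1 c1 d1 a2 b2 c2 d2 a3 b3 c3 d3 a4 b4 c4 d4 H00 H01 H02 H03 H11 H12 H13 H22 H23 H33) as C20.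
pose proof (cof_21 a1 b1 c1 d1 a2 b2 c2 d2 a3 b3 c3 d3 a4 b4 c4 d4 H00 H01 H02 H03 H11 H12 H13 H22 H23 H33) as C21.
pose proof (cof_22 a1 b1 c1 d1 a2 b2 c2 d2 a3 b3 c3 d3 a4 b4 c4 d4 H00 H01 H02 H03 H11 H12 H13 H22 H23 H33) as C22.
pose proof (cof_23 a1 b1 c1 d1 a2 b2 c2 d2 a3 b3 c3 d3 a4 b4 c4 d4 H00 H01 H02 H03 H11 H12 H13 H22 H23 H33) as C23.
pose proof (cof_30 a1 b1 c1 d1 a2 b2 c2 d2 a3 b3 c3 d3 a4 b4 c4 d4 H00 H01 H02 H03 H11 H12 H13 H22 H23 H33) as C30.
pose proof (cof_31 a1 b1 c1 d1 a2 b2 c2 d2 a3 b3 c3 d3 a4 b4 c4 d4 H00 H01 H02 H03 H11 H12 H13 H22 H23 H33) as C31.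
pose proof (cof_32 a1 b1 c1 d1 a2 b2 c2 d2 a3 b3 c3 d3 a4 b4 c4 d4 H00 H01 H02 H03 H11 H12 H13 H22 H23 H33) as C32.
pose proof (cof_33 a1 b1 c1 d1 a2 b2 c2 d2 a3 b3 c3 d3 a4 b4 c4 d4 H00 H01 H02 H03 H11 H12 H13 H22 H23 H33) as C33.
assert (L00 : a1*((b2*(c3*d4-d3*c4) - c2*(b3*d4-d3*b4) + d2*(b3*c4-c3*b4))) + b1*(-(a2*(c3*d4-d3*c4) - c2*(a3*d4-d3*a4) + d2*(a3*c4-c3*a4))) + c1*((a2*(b3*d4-d3*b4) - b2*(a3*d4-d3*a4) + d2*(a3*b4-b3*a4))) + d1*(-(a2*(b3*c4-c3*b4) - b2*(a3*c4-c3*a4) + c2*(a3*b4-b3*a4))) = 1 * (det4 a1 b1 c1 d1 a2 b2 c2 d2 a3 b3 c3 d3 a4 b4 c4 d4)) by (unfold det4; ring).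
rewrite C00, C01, C02, C03 in L00.
assert (L11 : a2*(-(b1*(c3*d4-d3*c4) - c1*(b3*d4-d3*b4) + d1*(b3*c4-c3*b4))) + b2*((a1*(c3*d4-d3*c4) - c1*(a3*d4-d3*a4) + d1*(a3*c4-c3*a4))) + c2*(-(a1*(b3*d4-d3*b4) - b1*(a3*d4-d3*a4) + d1*(a3*b4-b3*a4))) + d2*((a1*(b3*c4-c3*b4) - b1*(a3*c4-c3*a4) + c1*(a3*b4-b3*a4))) = 1 * (det4 a1 b1 c1 d1 a2 b2 c2 d2 a3 b3 c3 d3 a4 b4 c4 d4)) by (unfold det4; ring).
rewrite C10, C11, C12, C13 in L11.
assert (L22 : a3*((b1*(c2*d4-d2*c4) - c1*(b2*d4-d2*b4) + d1*(b2*c4-c2*b4))) + b3*(-(a1*(c2*d4-d2*c4) - c1*(a2*d4-d2*a4) + d1*(a2*c4-c2*a4))) + c3*((a1*(b2*d4-d2*b4) - b1*(a2*d4-d2*a4) + d1*(a2*b4-b2*a4))) + d3*(-(a1*(b2*c4-c2*b4) - b1*(a2*c4-c2*a4) + c1*(a2*b4-b2*a4))) = 1 * (det4 a1 b1 c1 d1 a2 b2 c2 d2 a3 b3 c3 d3 a4 b4 c4 d4)) by (unfold det4; ring).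
rewrite C20, C21, C22, C23 in L22.
assert (L33 : a4*(-(b1*(c2*d3-d2*c3) - c1*(b2*d3-d2*b3) + d1*(b2*c3-c2*b3))) + b4*((a1*(c2*d3-d2*c3) - c1*(a2*d3-d2*a3) + d1*(a2*c3-c2*a3))) + c4*(-(a1*(b2*d3-d2*b3) - b1*(a2*d3-d2*a3) + d1*(a2*b3-b2*a3))) + d4*((a1*(b2*c3-c2*b3) - b1*(a2*c3-c2*a3) + c1*(a2*b3-b2*a3))) = 1 * (det4 a1 b1 c1 d1 a2 b2 c2 d2 a3 b3 c3 d3 a4 b4 c4 d4)) by (unfold det4; ring).
rewrite C30, C31, C32, C33 in L33.
assert (L01 : a1*(-(b1*(c3*d4-d3*c4) - c1*(b3*d4-d3*b4) + d1*(b3*c4-c3*b4))) + b1*((a1*(c3*d4-d3*c4) - c1*(a3*d4-d3*a4) + d1*(a3*c4-c3*a4))) + c1*(-(a1*(b3*d4-d3*b4) - b1*(a3*d4-d3*a4) + d1*(a3*b4-b3*a4))) + d1*((a1*(b3*c4-c3*b4) - b1*(a3*c4-c3*a4) + c1*(a3*b4-b3*a4))) = 0 * (det4 a1 b1 c1 d1 a2 b2 c2 d2 a3 b3 c3 d3 a4 b4 c4 d4)) by (unfold det4; ring).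
rewrite C10, C11, C12, C13 in L01.
assert (L23 : a3*(-(b1*(c2*d3-d2*c3) - c1*(b2*d3-d2*b3) + d1*(b2*c3-c2*b3))) + b3*((a1*(c2*d3-d2*c3) - c1*(a2*d3-d2*a3) + d1*(a2*c3-c2*a3))) + c3*(-(a1*(b2*d3-d2*b3) - b1*(a2*d3-d2*a3) + d1*(a2*b3-b2*a3))) + d3*((a1*(b2*c3-c2*b3) - b1*(a2*c3-c2*a3) + c1*(a2*b3-b2*a3))) = 0 * (det4 a1 b1 c1 d1 a2 b2 c2 d2 a3 b3 c3 d3 a4 b4 c4 d4)) by (unfold det4; ring).
rewrite C30, C31, C32, C33 in L23.
assert (J1 : ((a2*(b3*d4-d3*b4) - b2*(a3*d4-d3*a4) + d2*(a3*b4-b3*a4)))*((a1*(b3*c4-c3*b4) - b1*(a3*c4-c3*a4) + c1*(a3*b4-b3*a4))) - (-(a2*(b3*c4-c3*b4) - b2*(a3*c4-c3*a4) + c2*(a3*b4-b3*a4)))*(-(a1*(b3*d4-d3*b4) - b1*(a3*d4-d3*a4) + d1*(a3*b4-b3*a4))) = (det4 a1 b1 c1 d1 a2 b2 c2 d2 a3 b3 c3 d3 a4 b4 c4 d4)*(a3*b4-b3*a4)) by (unfold det4; ring).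
assert (J2 : ((a1*(b2*d4-d2*b4) - b1*(a2*d4-d2*a4) + d1*(a2*b4-b2*a4)))*((a1*(b2*c3-c2*b3) - b1*(a2*c3-c2*a3) + c1*(a2*b3-b2*a3))) - (-(a1*(b2*c4-c2*b4) - b1*(a2*c4-c2*a4) + c1*(a2*b4-b2*a4)))*(-(a1*(b2*d3-d2*b3) - b1*(a2*d3-d2*a3) + d1*(a2*b3-b2*a3))) = (det4 a1 b1 c1 d1 a2 b2 c2 d2 a3 b3 c3 d3 a4 b4 c4 d4)*(a1*b2-b1*a2)) by (unfold det4; ring).
rewrite C02, C13, C03, C12 in J1. rewrite C22, C33, C23, C32 in J2.
set (DD := (det4 a1 b1 c1 d1 a2 b2 c2 d2 a3 b3 c3 d3 a4 b4 c4 d4)) in *. clear -HD L00 L11 L22 L33 L01 L23 J1 J2.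
assert (E: forall X Y, DD * X = DD * Y -> X = Y) by (intros X Y HXY; replace X with (DD*DD*X) by (rewrite HD; ring); replace Y with (DD*DD*Y) by (rewrite HD; ring); rewrite !Rmult_assoc, HXY; ring).
assert (R00 : (a1*a1+b1*b1+c1*c1+d1*d1) = 1) by (apply E; transitivity (1*DD); [rewrite <- L00; ring | ring]).
assert (R11 : (a2*a2+b2*b2+c2*c2+d2*d2) = 1) by (apply E; transitivity (1*DD); [rewrite <- L11; ring | ring]).
assert (R22 : (a3*a3+b3*b3+c3*c3+d3*d3) = 1) by (apply E; transitivity (1*DD); [rewrite <- L22; ring | ring]).
assert (R33 : (a4*a4+b4*b4+c4*c4+d4*d4) = 1) by (apply E; transitivity (1*DD); [rewrite <- L33; ring | ring]).
assert (R01 : (a1*a2+b1*b2+c1*c2+d1*d2) = 0) by (apply E; transitivity (0*DD); [rewrite <- L01; ring | ring]).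
assert (R23 : (a3*a4+b3*b4+c3*c4+d3*d4) = 0) by (apply E; transitivity (0*DD); [rewrite <- L23; ring | ring]).
assert (K1 : c1*d2-d1*c2 = DD*(a3*b4-b3*a4)) by (transitivity (DD*DD*(c1*d2-d1*c2)); [rewrite HD; ring| rewrite <- J1; ring]).
assert (K2 : c3*d4-d3*c4 = DD*(a1*b2-b1*a2)) by (transitivity (DD*DD*(c3*d4-d3*c4)); [rewrite HD; ring| rewrite <- J2; ring]).
repeat split; auto. rewrite K1, K2. replace (DD * (a3 * b4 - b3 * a4) * (DD * (a1 * b2 - b1 * a2))) with (DD*DD*((a3 * b4 - b3 * a4) * (a1 * b2 - b1 * a2))) by ring. rewrite HD; ring.
Qed.

Lemma sgn3 x y z : 0 < x*y -> 0 < y*z -> 0 < x*z.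
Proof. intros H1 H2.
  assert (H : 0 < (x*y)*(y*z)) by (apply Rmult_lt_0_compat; auto).
  replace ((x*y)*(y*z)) with ((x*z)*(y*y)) in H by ring.
  destruct (Rlt_or_le 0 (x*z)) as [Hp|Hp]; auto. exfalso.
  assert (0 <= y*y) by apply Rle_0_sqr.
  assert (Hq : (x*z)*(y*y) <= 0*(y*y)) by (apply Rmult_le_compat_r; auto).
  lra. Qed.

Lemma sgn3n x y z : 0 < x*y -> y*z < 0 -> x*z < 0.
Proof. intros H1 H2. assert (0 < x * (-z)) by (apply (sgn3 x y); nra). nra. Qed.

Lemma sgn3nn x y z : x*y < 0 -> x*z < 0 -> 0 < y*z.
Proof. intros H1 H2. apply (sgn3 y (-x) z); nra. Qed.

Lemma side_id (A B C D : pt) :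
  cross (psub C A) (psub B A) * cross (psub C A) (psub D A) =
  - (cross (psub B A) (psub C B) * cross (psub D C) (psub A D)).
Proof. destruct A, B, C, D. unfold cross, psub, px, py; cbn [fst snd]. ring. Qed.

Lemma sumsq_eq a1 b1 a2 b2 c1 d1 c2 d2 :
  c1*c1+d1*d1 = 1 - (a1*a1+b1*b1) -> c2*c2+d2*d2 = 1 - (a2*a2+b2*b2) ->
  c1*c2+d1*d2 = -(a1*a2+b1*b2) ->
  ((c1*c1-d1*d1)+(c2*c2-d2*d2))^2 + (2*c1*d1+2*c2*d2)^2 =
  ((a1*a1-b1*b1)+(a2*a2-b2*b2))^2 + (2*a1*b1+2*a2*b2)^2.
Proof.
  intros H1 H2 H3.
  replace (((c1*c1-d1*d1)+(c2*c2-d2*d2))^2 + (2*c1*d1+2*c2*d2)^2)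
    with (((c1*c1+d1*d1) - (c2*c2+d2*d2))^2 + 4*(c1*c2+d1*d2)^2) by ring.
  replace (((a1*a1-b1*b1)+(a2*a2-b2*b2))^2 + (2*a1*b1+2*a2*b2)^2)
    with (((a1*a1+b1*b1) - (a2*a2+b2*b2))^2 + 4*(a1*a2+b1*b2)^2) by ring.
  rewrite H1, H2, H3. ring.
Qed.

Lemma cross_csq_prod a1 b1 c1 d1 a2 b2 c2 d2 a3 b3 c3 d3 a4 b4 c4 d4 :
  c1*c2+d1*d2 = -(a1*a2+b1*b2) -> c3*c4+d3*d4 = -(a3*a4+b3*b4) ->
  (c1*d2-d1*c2)*(c3*d4-d3*c4) = (a1*b2-b1*a2)*(a3*b4-b3*a4) ->
  cross (csq (c1,d1)) (csq (c2,d2)) * cross (csq (c3,d3)) (csq (c4,d4)) =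
  cross (csq (a1,b1)) (csq (a2,b2)) * cross (csq (a3,b3)) (csq (a4,b4)).
Proof.
  intros H1 H2 H3. unfold cross, csq, px, py; cbn [fst snd].
  transitivity (4*(c1*c2+d1*d2)*(c3*c4+d3*d4)*((c1*d2-d1*c2)*(c3*d4-d3*c4))). ring.
  rewrite H1, H2, H3. ring.
Qed.

Theorem mainTheorem14 :
  forall A B C D : pt,
    nondegenerate A B C D ->
    convex_quad A B C D ->
    perimeter A B C D = 2 ->
    (exists B1 D1 : pt, B1_spec A B C D B1 /\ D1_spec A B C D D1) /\
    (forall B1 D1 K L M N : pt,
        B1_spec A B C D B1 -> D1_spec A B C D D1 ->
        is_dual A B C D K L M N ->
        exists f : pt -> pt,
          isometry f /\ f K = A /\ f L = B1 /\ f M = C /\ f N = D1).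
Proof.
  intros A B C D Hnd Hcv Hper.
  unfold perimeter in Hper.
  assert (Hs1 : Defs.dist A B = pnorm (z1 A B C D)) by (unfold Defs.dist, z1; apply pnorm_sym).
  assert (Hs2 : Defs.dist B C = pnorm (z2 A B C D)) by (unfold Defs.dist, z2; apply pnorm_sym).
  assert (Hs3 : Defs.dist C D = pnorm (z3 A B C D)) by (unfold Defs.dist, z3; apply pnorm_sym).
  assert (Hs4 : Defs.dist D A = pnorm (z4 A B C D)) by (unfold Defs.dist, z4; apply pnorm_sym).
  assert (Hcz : 0 < cross (z1 A B C D) (z2 A B C D) * cross (z3 A B C D) (z4 A B C D)).
  { destruct Hcv as [_ [_ [_ Hc]]]. cbv zeta in Hc.
    destruct Hc as [[h1 [h2 [h3 h4]]]|[h1 [h2 [h3 h4]]]].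
    - apply Rmult_lt_0_compat; auto.
    - nra. }
  assert (Hc12 : cross (z1 A B C D) (z2 A B C D) <> 0).
  { intro E. rewrite E in Hcz. lra. }
  assert (Hc34 : cross (z3 A B C D) (z4 A B C D) <> 0).
  { intro E. rewrite E in Hcz. lra. }
  destruct (tri3 _ _ Hc12) as [T1 [T2 T3]].
  destruct (tri3 _ _ Hc34) as [T4 [T5 T6]].
  assert (Hv12 : pnorm (padd (z1 A B C D) (z2 A B C D)) = pnorm (psub C A)).
  { apply pnorm_congr. destruct A, B, C, D. unfold padd, z1, z2, psub, px, py; cbn [fst snd]. ring. }
  assert (Hv34 : pnorm (padd (z3 A B C D) (z4 A B C D)) = pnorm (psub C A)).
  { apply pnorm_congr. destruct A, B, C, D. unfold padd, z3, z4, psub, px, py; cbn [fst snd]. ring. }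
  rewrite Hv12 in T1, T2, T3. rewrite Hv34 in T4, T5, T6.
  assert (Hdv : 0 < pnorm (psub C A)) by lra.
  assert (HBD : cross (psub C A) (psub B A) * cross (psub C A) (psub D A) < 0).
  { rewrite side_id. unfold z1, z2, z3, z4 in Hcz. lra. }
  assert (HBs : cross (psub C A) (psub B A) <> 0).
  { intro E. rewrite E in HBD. lra. }
  assert (HDs : cross (psub C A) (psub D A) <> 0).
  { intro E. rewrite E in HBD. lra. }
  split.
  - destruct (circle A C ((Defs.dist B C + Defs.dist C D + Defs.dist D A - Defs.dist A B) / 2)
                         ((Defs.dist A B + Defs.dist C D + Defs.dist D A - Defs.dist B C) / 2)
                         (cross (psub C A) (psub B A))) as [B1 [HB1 [HB2 HB3]]];
      [lra|lra|lra|exact HBs|].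
    destruct (circle A C ((Defs.dist A B + Defs.dist B C + Defs.dist C D - Defs.dist D A) / 2)
                         ((Defs.dist A B + Defs.dist B C + Defs.dist D A - Defs.dist C D) / 2)
                         (cross (psub C A) (psub D A))) as [D1 [HD1 [HD2 HD3]]];
      [lra|lra|lra|exact HDs|].
    exists B1, D1. split.
    + unfold B1_spec, same_open_side, Defs.dist. cbv zeta. unfold Defs.dist in HB1, HB2. auto.
    + unfold D1_spec, same_open_side, Defs.dist. cbv zeta. unfold Defs.dist in HD1, HD2. auto.
  - intros B1 D1 K L M N HB HD Hdual.
    unfold B1_spec, D1_spec, same_open_side in HB, HD. cbv zeta in HB, HD.
    destruct HB as [HBside [HB1 HB2]]. destruct HD as [HDside [HD1 HD2]].
    unfold is_dual in Hdual. cbv zeta in Hdual.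
    destruct Hdual as [[a1 b1] [[a2 b2] [[a3 b3] [[a4 b4] [Hu1 [Hu2 [Hu3 [Hu4 [_ [_ [_ Hrest]]]]]]]]]]].
    unfold px, py in Hrest. cbn [fst snd] in Hrest.
    destruct Hrest as [c1 [c2 [c3 [c4 [d1 [d2 [d3 [d4 [Hcc [Hdd [Hcd [Hca [Hcb [Hda [Hdb [HL [HM [HN HK]]]]]]]]]]]]]]]]]].
    assert (Hn1 : pnorm (z1 A B C D) = a1*a1+b1*b1) by (rewrite <- Hu1, pnorm_csq; unfold px, py; cbn [fst snd]; ring).
    assert (Hn2 : pnorm (z2 A B C D) = a2*a2+b2*b2) by (rewrite <- Hu2, pnorm_csq; unfold px, py; cbn [fst snd]; ring).
    assert (Hn3 : pnorm (z3 A B C D) = a3*a3+b3*b3) by (rewrite <- Hu3, pnorm_csq; unfold px, py; cbn [fst snd]; ring).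
    assert (Hn4 : pnorm (z4 A B C D) = a4*a4+b4*b4) by (rewrite <- Hu4, pnorm_csq; unfold px, py; cbn [fst snd]; ring).
    assert (Hsum : (a1*a1-b1*b1) + (a2*a2-b2*b2) + (a3*a3-b3*b3) + (a4*a4-b4*b4) = 0
                /\ 2*a1*b1 + 2*a2*b2 + 2*a3*b3 + 2*a4*b4 = 0).
    { clear -Hu1 Hu2 Hu3 Hu4. destruct A as [xa ya], B as [xb yb], C as [xc yc], D as [xd yd].
      unfold csq, z1, z2, z3, z4, psub, px, py in *; cbn [fst snd] in *.
      injection Hu1 as e1 f1. injection Hu2 as e2 f2. injection Hu3 as e3 f3. injection Hu4 as e4 f4.
      split; lra. }
    destruct Hsum as [Hsx Hsy].
    destruct (ortho4 a1 b1 c1 d1 a2 b2 c2 d2 a3 b3 c3 d3 a4 b4 c4 d4) as [R0 [R1 [R2 [R3 [R01 [R23 J]]]]]];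
      try lra.
    assert (FL : pnorm (psub L K) = 1 - Defs.dist A B).
    { rewrite HL, pnorm_csq. unfold px, py; cbn [fst snd]. lra. }
    assert (FM : pnorm (psub M L) = 1 - Defs.dist B C).
    { rewrite HM, pnorm_csq. unfold px, py; cbn [fst snd]. lra. }
    assert (FN : pnorm (psub N M) = 1 - Defs.dist C D).
    { rewrite HN, pnorm_csq. unfold px, py; cbn [fst snd]. lra. }
    assert (FK : pnorm (psub K N) = 1 - Defs.dist D A).
    { rewrite HK, pnorm_csq. unfold px, py; cbn [fst snd]. lra. }
    assert (Fdiag : pnorm (psub M K) = pnorm (psub C A)).
    { apply pnorm_congr.
      assert (E := sumsq_eq a1 b1 a2 b2 c1 d1 c2 d2).
      assert (Hx : psub M K = padd (psub L K) (psub M L))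
        by (destruct K, L, M; unfold padd, psub, px, py; cbn [fst snd]; f_equal; ring).
      assert (Hy : psub C A = padd (z1 A B C D) (z2 A B C D))
        by (destruct A, B, C; unfold padd, z1, z2, psub, px, py; cbn [fst snd]; f_equal; ring).
      rewrite Hx, Hy, HL, HM, <- Hu1, <- Hu2. unfold padd, csq, px, py; cbn [fst snd].
      apply E; lra. }
    assert (Hdual : cross (psub M K) (psub L K) * cross (psub M K) (psub N K) < 0).
    { rewrite side_id, HL, HM, HN, HK.
      rewrite (cross_csq_prod a1 b1 c1 d1 a2 b2 c2 d2 a3 b3 c3 d3 a4 b4 c4 d4); try lra.
      fold px. rewrite Hu1, Hu2, Hu3, Hu4. lra. }
    set (X := cross (psub M K) (psub L K)) in *.
    set (Y := cross (psub C A) (psub B1 A)) in *.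
    set (sg := if Rlt_dec 0 (X*Y) then 1 else -1).
    assert (Hsg : sg * sg = 1) by (unfold sg; destruct (Rlt_dec 0 (X*Y)); ring).
    assert (HXY : 0 < sg * X * Y).
    { assert (X <> 0) by (intro E; rewrite E in Hdual; lra).
      assert (Y <> 0) by (intro E; rewrite E in HBside; lra).
      unfold sg; destruct (Rlt_dec 0 (X*Y)) as [h|h].
      - lra.
      - assert (X*Y <> 0) by (apply Rmult_integral_contrapositive; auto). lra. }
    destruct (rigid K M A C sg Hsg Fdiag Hdv) as [f [Hiso [HfK [HfM Hcr]]]].
    exists f. split; [exact Hiso|]. split; [exact HfK|]. split; [|split; [exact HfM|]].
    + apply (circle_uniq A C); auto.
      * change (Defs.dist (f L) A = Defs.dist B1 A). replace (Defs.dist (f _) A) with (Defs.dist (f L) (f K)) by (rewrite HfK; reflexivity). rewrite Hiso. unfold Defs.dist at 1. rewrite FL. lra.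
      * change (Defs.dist (f L) C = Defs.dist B1 C). replace (Defs.dist (f _) C) with (Defs.dist (f L) (f M)) by (rewrite HfM; reflexivity). rewrite Hiso. unfold Defs.dist at 1. rewrite pnorm_sym, FM. lra.
      * rewrite Hcr. fold X Y. lra.
    + apply (circle_uniq A C); auto.
      * change (Defs.dist (f N) A = Defs.dist D1 A). replace (Defs.dist (f _) A) with (Defs.dist (f N) (f K)) by (rewrite HfK; reflexivity). rewrite Hiso. unfold Defs.dist at 1. rewrite pnorm_sym, FK. lra.
      * change (Defs.dist (f N) C = Defs.dist D1 C). replace (Defs.dist (f _) C) with (Defs.dist (f N) (f M)) by (rewrite HfM; reflexivity). rewrite Hiso. unfold Defs.dist at 1. rewrite FN. lra.
      * rewrite Hcr. set (Z := cross (psub M K) (psub N K)) in *.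
        set (Bs := cross (psub C A) (psub B A)) in *.
        set (Ds := cross (psub C A) (psub D A)) in *.
        set (D1s := cross (psub C A) (psub D1 A)) in *.
        assert (S1 : 0 < (sg*X) * Bs) by (apply (sgn3 _ Y); lra).
        assert (S2 : (sg*X) * Ds < 0) by (apply (sgn3n _ Bs); lra).
        assert (S3 : 0 < (-(sg*X)) * D1s) by (apply (sgn3 _ Ds); lra).
        assert (S4 : (sg*X) * (sg*Z) < 0).
        { replace ((sg*X) * (sg*Z)) with ((sg*sg)*(X*Z)) by ring. rewrite Hsg. lra. }
        apply (sgn3nn (sg*X)); lra.
Qed.
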